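(* Let $H\ge1$, $m\ge1$ be integers, let $\Phi\in\mathbb{R}^{|\mathcal S|\times d}$ be a feature matrix (row $s$ is $\phi(s)^\top$), and let $\mathcal D\subseteq\mathcal S$ be a fixed set of states such that the submatrix $\Phi_{\mathcal D}$ (rows of $\Phi$ indexed by $\mathcal D$) has rank $d$. Let $\mathcal P\in\{0,1\}^{|\mathcal D|\times|\mathcal S|}$ be the matrix selecting the coordinates in $\mathcal D$ (in the same order as the rows of $\Phi_{\mathcal D}$), and $\mathcal M:=\Phi(\Phi_{\mathcal D}^\top\Phi_{\mathcal D})^{-1}\Phi_{\mathcal D}^\top\mathcal P$. Given $\theta_0\in\mathbb{R}^d$, define iteratively: let $(\mu_{k+1},\nu_{k+1})$ be any pair of stationary randomized policies with $T_{\mu_{k+1},\nu_{k+1}}(T^{H-1}\Phi\theta_k)=T^H\Phi\theta_k$, and let $\theta_{k+1}$ be the least-squares solution $$\theta_{k+1}=\arg\min_\theta\sum_{s\in\mathcal D}\Big((\Phi\theta)(s)-\big(T^m_{\mu_{k+1},\nu_{k+1}}T^{H-1}\Phi\theta_k\big)(s)\Big)^2,$$ so that $\Phi\theta_{k+1}=\mathcal M\,T^m_{\mu_{k+1},\nu_{k+1}}T^{H-1}\Phi\theta_k$. Let $\delta_{FV}:=\|\mathcal M\|_\infty$ (induced $\infty$-norm) and $\delta_{app}:=\sup_{k\ge1}\|J^{\mu_k,\nu_k}-\mathcal M J^{\mu_k,\nu_k}\|_\infty$, and suppose $$\kappa:=\alpha^{H-1}+\frac{(\delta_{FV}\alpha^{m+H-1}+\alpha^{H-1})(1+\alpha)}{1-\alpha}<1.$$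 Then for all $k\ge0$, $$\|\Phi\theta_k-J^*\|_\infty\le\kappa^k\|\Phi\theta_0-J^*\|_\infty+\frac{\delta_{app}}{1-\kappa},$$ and hence $\limsup_{k\to\infty}\|\Phi\theta_k-J^*\|_\infty\le\frac{\delta_{app}}{1-\kappa}$.
   Context: A two-player zero-sum discounted Markov game has a finite state space $\mathcal S$, finite action sets $\mathcal U(s)$ (maximizer) and $\mathcal V(s)$ (minimizer) at each state $s$, transition probabilities $P(s'|s,u,v)$, reward $g(s,u,v)\in[0,1]$, and discount factor $\alpha\in(0,1)$. A (stationary randomized) policy pair $(\mu,\nu)$ assigns to each $s$ distributions $\mu(s)\in\Delta(\mathcal U(s))$, $\nu(s)\in\Delta(\mathcal V(s))$. For $V\in\mathbb{R}^{|\mathcal S|}$ and $s\in\mathcal S$ let $A_{V,s}(u,v)=g(s,u,v)+\alpha\sum_{s'}P(s'|s,u,v)V(s')$. Define $T_{\mu,\nu}V(s)=\mu(s)^\top A_{V,s}\nu(s)$ and the Bellman operator $TV(s)=\max_{p\in\Delta(\mathcal U(s))}\min_{q\in\Delta(\mathcal V(s))}p^\top A_{V,s}q$. $J^{\mu,\nu}$ is the unique fixed point of $T_{\mu,\nu}$ and $J^*$ the unique fixed point of $T$ (the Nash equilibrium value). $T^j$, $T^j_{\mu,\nu}$ denote $j$-fold compositions, $T^0$ the identity. *)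

(* Defs.v *)
From HB Require Import structures.
From mathcomp Require Import all_boot all_order all_algebra.
From mathcomp Require Import all_classical all_reals.
From mathcomp Require Import topology normedtype sequences.
Set Implicit Arguments. Unset Strict Implicit. Unset Printing Implicit Defensive.
Import Order.TTheory GRing.Theory Num.Theory.
Local Open Scope ring_scope.
Local Open Scope classical_set_scope.

Section Game.
Variable R : realType.

Definition is_dist (A : finType) (p : {ffun A -> R}) : Prop :=
  (forall a, 0 <= p a) /\ \sum_(a : A) p a = 1.

Definition vnorm (k : nat) (v : 'cV[R]_k) : R := \big[Num.max/0]_(i < k) `|v i 0|.

Definition mnorm_inf (p q : nat) (M : 'M[R]_(p, q)) : R :=
  sup [set x | exists v : 'cV[R]_q, vnorm v <= 1 /\ x = vnorm (M *m v)].

Definition Amat (n : nat) (U W : 'I_n -> finType)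
  (P : forall s, U s -> W s -> 'I_n -> R) (g : forall s, U s -> W s -> R)
  (alpha : R) (V : 'cV[R]_n) (s : 'I_n) (u : U s) (w : W s) : R :=
  g s u w + alpha * \sum_(s' < n) P s u w s' * V s' 0.

Definition bilin (A : finType) (B : finType) (p : {ffun A -> R}) (M : A -> B -> R)
  (q : {ffun B -> R}) : R := \sum_(a : A) \sum_(b : B) p a * M a b * q b.

Definition Tpol (n : nat) (U W : 'I_n -> finType)
  (P : forall s, U s -> W s -> 'I_n -> R) (g : forall s, U s -> W s -> R)
  (alpha : R) (mu : forall s, {ffun U s -> R}) (nu : forall s, {ffun W s -> R})
  (V : 'cV[R]_n) : 'cV[R]_n :=
  \col_(s < n) bilin (mu s) (@Amat n U W P g alpha V s) (nu s).

Definition Tbell (n : nat) (U W : 'I_n -> finType)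
  (P : forall s, U s -> W s -> 'I_n -> R) (g : forall s, U s -> W s -> R)
  (alpha : R) (V : 'cV[R]_n) : 'cV[R]_n :=
  \col_(s < n) sup [set x | exists p : {ffun U s -> R}, is_dist p /\
      x = inf [set y | exists q : {ffun W s -> R}, is_dist q /\
                 y = bilin p (@Amat n U W P g alpha V s) q]].

End Game.

(* Main.v *)
Require Import Defs.
From HB Require Import structures.
From mathcomp Require Import all_boot all_order all_algebra.
From mathcomp Require Import all_classical all_reals.
From mathcomp Require Import topology normedtype sequences.
From mathcomp Require Import ring lra.
Import Order.TTheory GRing.Theory Num.Theory.
Import numFieldNormedType.Exports.
Set Implicit Arguments. Unset Strict Implicit. Unset Printing Implicit Defensive.
Local Open Scope ring_scope.
Local Open Scope classical_set_scope.
Lemma vnorm_le (R : realType) k (v : 'cV[R]_k) c :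
  0 <= c -> (forall i, `|v i 0| <= c) -> vnorm v <= c.
Proof. by move=> c0 h; rewrite /vnorm; apply: bigmax_le. Qed.
Lemma ler_vnorm (R : realType) k (v : 'cV[R]_k) i : `|v i 0| <= vnorm v.
Proof. by rewrite /vnorm; apply: (le_bigmax _ (fun j => `|v j 0|)). Qed.
Lemma vnorm_ge0 (R : realType) k (v : 'cV[R]_k) : 0 <= vnorm v.
Proof.
rewrite /vnorm; apply: (big_ind (fun x => 0 <= x)) => // x y hx hy.
by rewrite le_max hx.
Qed.
Lemma vnormD (R : realType) k (u v : 'cV[R]_k) : vnorm (u + v) <= vnorm u + vnorm v.
Proof.
apply: vnorm_le; first by rewrite addr_ge0 // vnorm_ge0.
move=> i; rewrite mxE; apply: le_trans (ler_normD _ _) _.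
by apply: lerD; apply: ler_vnorm.
Qed.
Lemma vnormC (R : realType) k (u v : 'cV[R]_k) : vnorm (u - v) = vnorm (v - u).
Proof.
have h (a b : 'cV[R]_k) : vnorm (a - b) <= vnorm (b - a).
  apply: vnorm_le; first exact: vnorm_ge0.
  by move=> i; have := ler_vnorm (b - a) i; rewrite !mxE distrC.
by apply/eqP; rewrite eq_le !h.
Qed.
Lemma bilin_sub (R : realType) (A B : finType) (p : {ffun A -> R}) (M1 M2 : A -> B -> R) (q : {ffun B -> R}) :
  bilin p M1 q - bilin p M2 q = bilin p (fun a b => M1 a b - M2 a b) q.
Proof.
rewrite /bilin -sumrB; apply: eq_bigr => a _; rewrite -sumrB.
by apply: eq_bigr => b _; ring.
Qed.
Lemma dist_le1 (R : realType) (A : finType) (p : {ffun A -> R}) a :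
  is_dist p -> p a <= 1.
Proof.
case=> h0 h1; rewrite -h1 (bigD1 a) //= lerDl; exact: sumr_ge0.
Qed.
Lemma bilin_bound (R : realType) (A B : finType) (p : {ffun A -> R}) (M : A -> B -> R)
  (q : {ffun B -> R}) c :
  is_dist p -> is_dist q -> (forall a b, `|M a b| <= c) -> `|bilin p M q| <= c.
Proof.
move=> hp hq hM; have [hp0 hp1] := hp; have [hq0 hq1] := hq.
apply: le_trans (ler_norm_sum _ _ _) _.
apply: (@le_trans _ _ (\sum_a \sum_b p a * c * q b)).
  apply: ler_sum => a _; apply: le_trans (ler_norm_sum _ _ _) _.
  apply: ler_sum => b _; rewrite !normrM (ger0_norm (hp0 a)) (ger0_norm (hq0 b)).
  by rewrite ler_wpM2r // ler_wpM2l.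
under eq_bigr do rewrite -mulr_sumr hq1 mulr1.
by rewrite -mulr_suml hp1 mul1r.
Qed.
Lemma wavg_bound (R : realType) n (P : 'I_n -> R) (x : 'I_n -> R) c :
  (forall s, 0 <= P s) -> \sum_s P s = 1 -> (forall s, `|x s| <= c) ->
  `|\sum_s P s * x s| <= c.
Proof.
move=> h0 h1 hx; apply: le_trans (ler_norm_sum _ _ _) _.
apply: (@le_trans _ _ (\sum_s P s * c)).
  by apply: ler_sum => s _; rewrite normrM ger0_norm // ler_wpM2l.
by rewrite -mulr_suml h1 mul1r.
Qed.

Lemma Amat_diff (R : realType) n (U W : 'I_n -> finType)
  (P : forall s, U s -> W s -> 'I_n -> R) (g : forall s, U s -> W s -> R) alpha
  (hP0 : forall s u w s', 0 <= P s u w s')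
  (hP1 : forall s u w, \sum_(s' < n) P s u w s' = 1) (ha : 0 <= alpha)
  V V' s u w :
  `|@Amat _ _ _ _ P g alpha V s u w - @Amat _ _ _ _ P g alpha V' s u w| <= alpha * vnorm (V - V').
Proof.
rewrite /Amat opprD addrACA subrr add0r -mulrBr -sumrB normrM ger0_norm // ler_wpM2l //.
under eq_bigr do rewrite -mulrBr.
apply: wavg_bound => // s'; have := ler_vnorm (V - V') s'; by rewrite !mxE.
Qed.

Lemma Amat_bound (R : realType) n (U W : 'I_n -> finType)
  (P : forall s, U s -> W s -> 'I_n -> R) (g : forall s, U s -> W s -> R) alpha
  (hP0 : forall s u w s', 0 <= P s u w s')
  (hP1 : forall s u w, \sum_(s' < n) P s u w s' = 1)
  (hg : forall s u w, 0 <= g s u w <= 1) (ha : 0 <= alpha)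
  V s u w :
  `|@Amat _ _ _ _ P g alpha V s u w| <= 1 + alpha * vnorm V.
Proof.
rewrite /Amat; apply: le_trans (ler_normD _ _) _; apply: lerD.
  by have /andP[h0 h1] := hg s u w; rewrite ger0_norm.
rewrite normrM ger0_norm // ler_wpM2l //.
by apply: wavg_bound => // s'; exact: ler_vnorm.
Qed.

Lemma Tpol_contr (R : realType) n (U W : 'I_n -> finType)
  (P : forall s, U s -> W s -> 'I_n -> R) (g : forall s, U s -> W s -> R) alpha
  (hP0 : forall s u w s', 0 <= P s u w s')
  (hP1 : forall s u w, \sum_(s' < n) P s u w s' = 1) (ha : 0 <= alpha)
  (mu : forall s, {ffun U s -> R}) (nu : forall s, {ffun W s -> R})
  (hmu : forall s, is_dist (mu s)) (hnu : forall s, is_dist (nu s)) V V' :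
  vnorm (Tpol P g alpha mu nu V - Tpol P g alpha mu nu V') <= alpha * vnorm (V - V').
Proof.
apply: vnorm_le; first by rewrite mulr_ge0 // vnorm_ge0.
move=> s; rewrite !mxE bilin_sub; apply: bilin_bound => // a b.
exact: Amat_diff.
Qed.

Lemma Tpol_iter (R : realType) n (U W : 'I_n -> finType)
  (P : forall s, U s -> W s -> 'I_n -> R) (g : forall s, U s -> W s -> R) alpha
  (hP0 : forall s u w s', 0 <= P s u w s')
  (hP1 : forall s u w, \sum_(s' < n) P s u w s' = 1) (ha : 0 <= alpha)
  (mu : forall s, {ffun U s -> R}) (nu : forall s, {ffun W s -> R})
  (hmu : forall s, is_dist (mu s)) (hnu : forall s, is_dist (nu s)) V J k :
  Tpol P g alpha mu nu J = J ->
  vnorm (iter k (Tpol P g alpha mu nu) V - J) <= alpha ^+ k * vnorm (V - J).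
Proof.
move=> hJ; elim: k => [|k IH]; first by rewrite expr0 mul1r.
rewrite iterS -{1}hJ; apply: le_trans (Tpol_contr g hP0 hP1 ha hmu hnu _ _) _.
by rewrite exprS -mulrA ler_wpM2l.
Qed.

Lemma Tpol_fix_bound (R : realType) n (U W : 'I_n -> finType)
  (P : forall s, U s -> W s -> 'I_n -> R) (g : forall s, U s -> W s -> R) alpha
  (hP0 : forall s u w s', 0 <= P s u w s')
  (hP1 : forall s u w, \sum_(s' < n) P s u w s' = 1)
  (hg : forall s u w, 0 <= g s u w <= 1) (ha : 0 <= alpha)
  (mu : forall s, {ffun U s -> R}) (nu : forall s, {ffun W s -> R})
  (hmu : forall s, is_dist (mu s)) (hnu : forall s, is_dist (nu s)) J :
  Tpol P g alpha mu nu J = J -> vnorm J <= 1 + alpha * vnorm J.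
Proof.
move=> hJ; rewrite -{1}hJ; apply: vnorm_le.
  by rewrite addr_ge0 // mulr_ge0 // vnorm_ge0.
move=> s; rewrite mxE; apply: bilin_bound => // a b; exact: Amat_bound.
Qed.

Lemma inf_shift (R : realType) (X : Type) (D : X -> Prop) (f g : X -> R) c B :
  (exists x, D x) -> (forall x, D x -> -B <= f x) -> (forall x, D x -> -B <= g x) ->
  (forall x, D x -> f x <= g x + c) ->
  inf [set y | exists x, D x /\ y = f x] <= inf [set y | exists x, D x /\ y = g x] + c.
Proof.
move=> [x0 Dx0] hf hg hfg; rewrite -lerBlDr; apply: lb_le_inf.
  by exists (g x0), x0.
move=> y [x [Dx ->]]; rewrite lerBlDr; apply: le_trans (hfg x Dx).
apply: ge_inf; last by exists x.
by exists (-B) => z [x' [Dx' ->]]; apply: hf.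
Qed.

Lemma sup_shift (R : realType) (X : Type) (D : X -> Prop) (f g : X -> R) c B :
  (exists x, D x) -> (forall x, D x -> f x <= B) -> (forall x, D x -> g x <= B) ->
  (forall x, D x -> f x <= g x + c) ->
  sup [set y | exists x, D x /\ y = f x] <= sup [set y | exists x, D x /\ y = g x] + c.
Proof.
move=> [x0 Dx0] hf hg hfg; apply: ge_sup.
  by exists (f x0), x0.
move=> y [x [Dx ->]]; apply: le_trans (hfg x Dx) _; rewrite lerD2r.
apply: ub_le_sup; last by exists x.
by exists B => z [x' [Dx' ->]]; apply: hg.
Qed.

Lemma inf_bounds (R : realType) (X : Type) (D : X -> Prop) (f : X -> R) B :
  (exists x, D x) -> (forall x, D x -> `|f x| <= B) ->
  `|inf [set y | exists x, D x /\ y = f x]| <= B.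
Proof.
move=> [x0 Dx0] hf; rewrite ler_norml; apply/andP; split.
  apply: lb_le_inf; first by exists (f x0), x0.
  by move=> y [x [Dx ->]]; have := hf x Dx; rewrite ler_norml => /andP[].
apply: le_trans (_ : f x0 <= B); last by have := hf x0 Dx0; rewrite ler_norml => /andP[].
apply: ge_inf; last by exists x0.
by exists (-B) => z [x' [Dx' ->]]; have := hf x' Dx'; rewrite ler_norml => /andP[].
Qed.

Lemma exists_dist (R : realType) (A : finType) : (0 < #|A|)%N ->
  exists p : {ffun A -> R}, is_dist p.
Proof.
case/card_gt0P => a0 _; exists [ffun a => (a == a0)%:R]; split.
  by move=> a; rewrite ffunE ler0n.
under eq_bigr do rewrite ffunE.
rewrite (bigD1 a0) //= eqxx big1 ?addr0 // => b /negbTE ->; done.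
Qed.

Lemma Tbell_le (R : realType) n (U W : 'I_n -> finType)
  (P : forall s, U s -> W s -> 'I_n -> R) (g : forall s, U s -> W s -> R) alpha
  (hU : forall s, (0 < #|U s|)%N) (hW : forall s, (0 < #|W s|)%N)
  (hP0 : forall s u w s', 0 <= P s u w s')
  (hP1 : forall s u w, \sum_(s' < n) P s u w s' = 1)
  (hg : forall s u w, 0 <= g s u w <= 1) (ha : 0 <= alpha) V V' s :
  Tbell P g alpha V s 0 <= Tbell P g alpha V' s 0 + alpha * vnorm (V - V').
Proof.
rewrite !mxE.
set B := 1 + alpha * (vnorm V + vnorm V').
have hbV : forall p q, is_dist p -> is_dist q ->
    `|bilin p (@Amat _ _ _ _ P g alpha V s) q| <= B.
  move=> p q hp hq; apply: bilin_bound => // a b.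
  apply: le_trans (@Amat_bound _ _ _ _ P g alpha hP0 hP1 hg ha V s a b) _.
  by rewrite lerD2l ler_wpM2l // lerDl vnorm_ge0.
have hbV' : forall p q, is_dist p -> is_dist q ->
    `|bilin p (@Amat _ _ _ _ P g alpha V' s) q| <= B.
  move=> p q hp hq; apply: bilin_bound => // a b.
  apply: le_trans (@Amat_bound _ _ _ _ P g alpha hP0 hP1 hg ha V' s a b) _.
  by rewrite lerD2l ler_wpM2l // lerDr vnorm_ge0.
apply: (@sup_shift _ _ _ _ _ _ B).
- exact: exists_dist.
- move=> p hp; have := @inf_bounds R _ (@is_dist R (W s)) _ B (exists_dist R (hW s))
    (fun q hq => hbV p q hp hq).
  by rewrite ler_norml => /andP[].
- move=> p hp; have := @inf_bounds R _ (@is_dist R (W s)) _ B (exists_dist R (hW s))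
    (fun q hq => hbV' p q hp hq).
  by rewrite ler_norml => /andP[].
move=> p hp; apply: (@inf_shift _ _ _ _ _ _ B).
- exact: exists_dist.
- by move=> q hq; have := hbV p q hp hq; rewrite ler_norml => /andP[].
- by move=> q hq; have := hbV' p q hp hq; rewrite ler_norml => /andP[].
move=> q hq; rewrite -lerBlDl; apply: le_trans (ler_norm _) _.
rewrite bilin_sub; apply: bilin_bound => // a b; exact: Amat_diff.
Qed.

Lemma Tbell_contr (R : realType) n (U W : 'I_n -> finType)
  (P : forall s, U s -> W s -> 'I_n -> R) (g : forall s, U s -> W s -> R) alpha
  (hU : forall s, (0 < #|U s|)%N) (hW : forall s, (0 < #|W s|)%N)
  (hP0 : forall s u w s', 0 <= P s u w s')
  (hP1 : forall s u w, \sum_(s' < n) P s u w s' = 1)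
  (hg : forall s u w, 0 <= g s u w <= 1) (ha : 0 <= alpha) V V' :
  vnorm (Tbell P g alpha V - Tbell P g alpha V') <= alpha * vnorm (V - V').
Proof.
apply: vnorm_le; first by rewrite mulr_ge0 // vnorm_ge0.
move=> s; have h1 := Tbell_le hU hW hP0 hP1 hg ha V' V s.
have h2 := Tbell_le hU hW hP0 hP1 hg ha V V' s.
rewrite vnormC in h1; rewrite !mxE in h1 h2 *; rewrite ler_norml; apply/andP; split; lra.
Qed.

Lemma Tbell_iter (R : realType) n (U W : 'I_n -> finType)
  (P : forall s, U s -> W s -> 'I_n -> R) (g : forall s, U s -> W s -> R) alpha
  (hU : forall s, (0 < #|U s|)%N) (hW : forall s, (0 < #|W s|)%N)
  (hP0 : forall s u w s', 0 <= P s u w s')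
  (hP1 : forall s u w, \sum_(s' < n) P s u w s' = 1)
  (hg : forall s u w, 0 <= g s u w <= 1) (ha : 0 <= alpha) V J k :
  Tbell P g alpha J = J ->
  vnorm (iter k (Tbell P g alpha) V - J) <= alpha ^+ k * vnorm (V - J).
Proof.
move=> hJ; elim: k => [|k IH]; first by rewrite expr0 mul1r.
rewrite iterS -{1}hJ; apply: le_trans (Tbell_contr hU hW hP0 hP1 hg ha _ _) _.
by rewrite exprS -mulrA ler_wpM2l.
Qed.

Lemma mulmx_vnorm_crude (R : realType) p q (M : 'M[R]_(p, q)) v :
  vnorm (M *m v) <= (\sum_i \sum_j `|M i j|) * vnorm v.
Proof.
apply: vnorm_le; first by rewrite mulr_ge0 ?vnorm_ge0 // sumr_ge0 // => i _; rewrite sumr_ge0.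
move=> i; rewrite mxE; apply: le_trans (ler_norm_sum _ _ _) _.
apply: (@le_trans _ _ ((\sum_j `|M i j|) * vnorm v)).
  rewrite mulr_suml; apply: ler_sum => j _; rewrite normrM ler_wpM2l //.
  exact: ler_vnorm.
rewrite ler_wpM2r ?vnorm_ge0 //.
by rewrite (bigD1 i) //= lerDl sumr_ge0 // => k _; rewrite sumr_ge0.
Qed.

Lemma mnorm_ub (R : realType) p q (M : 'M[R]_(p, q)) :
  has_ubound [set x | exists v : 'cV[R]_q, vnorm v <= 1 /\ x = vnorm (M *m v)].
Proof.
exists (\sum_i \sum_j `|M i j|) => x [v [hv ->]].
apply: le_trans (mulmx_vnorm_crude M v) _.
by rewrite ler_piMr // sumr_ge0 // => i _; rewrite sumr_ge0.
Qed.

Lemma vnorm0 (R : realType) q : vnorm (0 : 'cV[R]_q) = 0.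
Proof.
apply/eqP; rewrite eq_le vnorm_ge0 andbT; apply: vnorm_le => // i.
by rewrite mxE normr0.
Qed.

Lemma mnorm_ge0 (R : realType) p q (M : 'M[R]_(p, q)) : 0 <= mnorm_inf M.
Proof.
rewrite /mnorm_inf; apply: le_trans (ub_le_sup (mnorm_ub M) _).
  exact: (vnorm_ge0 (M *m 0)).
by exists 0; rewrite vnorm0.
Qed.

Lemma mnorm_bound (R : realType) p q (M : 'M[R]_(p, q)) v :
  vnorm (M *m v) <= mnorm_inf M * vnorm v.
Proof.
have [r0|r0] := eqVneq (vnorm v) 0.
  by apply: le_trans (mulmx_vnorm_crude M v) _; rewrite r0 !mulr0.
have rp : 0 < vnorm v by rewrite lt0r r0 vnorm_ge0.
set r := vnorm v in r0 rp *.
set w := r^-1 *: v.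
have ri : 0 <= r^-1 by rewrite invr_ge0 ltW.
have hw : vnorm w <= 1.
  apply: vnorm_le => // i; rewrite mxE normrM (ger0_norm ri) -(mulVf r0).
  by rewrite ler_wpM2l //; exact: ler_vnorm.
have hMw : vnorm (M *m w) <= mnorm_inf M.
  by apply: ub_le_sup; [exact: mnorm_ub | exists w].
have hv : M *m v = r *: (M *m w) by rewrite /w scalemxAr scalerA mulfV // scale1r.
apply: vnorm_le; first exact: (mulr_ge0 (mnorm_ge0 M) (ltW rp)).
move=> i; rewrite hv mxE normrM (ger0_norm (ltW rp)) mulrC (ler_wpM2r (ltW rp)) //.
by apply: le_trans _ hMw; exact: ler_vnorm.
Qed.

Lemma sqsum0 (R : realType) p (y : 'I_p -> R) :
  \sum_i y i ^+ 2 <= 0 -> forall i, y i = 0.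
Proof.
move=> h i; apply/eqP; rewrite -sqrf_eq0 eq_le sqr_ge0 andbT.
apply: le_trans h; rewrite (bigD1 i) //= lerDl sumr_ge0 // => j _; exact: sqr_ge0.
Qed.

Lemma AtA_unit (R : realType) p d (A : 'M[R]_(p, d)) :
  \rank A = d -> A^T *m A \in unitmx.
Proof.
move=> hr; rewrite -row_free_unit; apply: inj_row_free => v hv.
set w := v *m A^T.
have hw : w *m w^T = 0.
  by rewrite /w trmx_mul trmxK mulmxA -(mulmxA v) hv mul0mx.
have w0 : w = 0.
  apply/matrixP => i j; rewrite (ord1 i) [RHS]mxE.
  have := congr1 (fun M : 'M_1 => M 0 0) hw; rewrite /= [RHS]mxE [LHS]mxE => h.
  have h2 : \sum_k w 0 k ^+ 2 <= 0.
    rewrite -[X in _ <= X]h le_eqVlt; apply/orP; left; apply/eqP; apply: eq_bigr => k _; by rewrite expr2 [w^T k 0]mxE.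
  exact: (sqsum0 (y := fun k => w 0 k) h2 j).
have rf : row_free A^T by rewrite /row_free mxrank_tr hr.
by apply: (row_free_inj rf); rewrite mul0mx.
Qed.

Lemma lsq (R : realType) n d p (Phi : 'M[R]_(n, d)) (idx : 'I_p -> 'I_n)
  (A : 'M[R]_(p, d)) (Ps : 'M[R]_(p, n)) (Y : 'cV[R]_n) (t : 'cV[R]_d) :
  (forall i j, A i j = Phi (idx i) j) ->
  (forall i s, Ps i s = (if idx i == s then 1 else 0)) ->
  \rank A = d ->
  (forall th : 'cV[R]_d, \sum_(i < p) ((Phi *m t) (idx i) 0 - Y (idx i) 0) ^+ 2
           <= \sum_(i < p) ((Phi *m th) (idx i) 0 - Y (idx i) 0) ^+ 2) ->
  Phi *m t = Phi *m invmx (A^T *m A) *m A^T *m Ps *m Y.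
Proof.
move=> hA hPs hr hmin.
set b := Ps *m Y.
have hPhi (th : 'cV[R]_d) i : (Phi *m th) (idx i) 0 = (A *m th) i 0.
  by rewrite !mxE; apply: eq_bigr => j _; rewrite hA.
have hY i : Y (idx i) 0 = b i 0.
  rewrite /b mxE (bigD1 (idx i)) //= hPs eqxx mul1r big1 ?addr0 // => s hs.
  by rewrite hPs eq_sym (negbTE hs) mul0r.
set B := A^T *m A.
have hB := AtA_unit hr.
set ts := invmx B *m A^T *m b.
have hnorm : A^T *m (A *m ts - b) = 0.
  rewrite mulmxBr /ts !mulmxA -/B mulmxV // mul1mx subrr //.
set z := t - ts.
set e := A *m ts - b.
have hte : A *m t - b = A *m z + e by rewrite /z /e mulmxBr addrA subrK.
have hxe : \sum_i (A *m z) i 0 * e i 0 = 0.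
  have hz0 : (A *m z)^T *m e = 0 by rewrite trmx_mul -mulmxA hnorm mulmx0.
  have := congr1 (fun M : 'M_1 => M 0 0) hz0; rewrite /= => h.
  rewrite [X in _ = X]mxE in h; rewrite -[RHS]h mxE; apply: eq_bigr => i _.
  by rewrite [(A *m z)^T _ _]mxE.
have hsq : \sum_i (A *m z) i 0 ^+ 2 <= 0.
  have := hmin ts; under eq_bigr do rewrite hPhi hY.
  under [X in _ <= X -> _]eq_bigr do rewrite hPhi hY.
  have -> : \sum_i ((A *m t) i 0 - b i 0) ^+ 2
       = \sum_i (A *m z) i 0 ^+ 2 + \sum_i e i 0 ^+ 2.
    rewrite (eq_bigr (fun i => (A *m z) i 0 ^+ 2 + e i 0 ^+ 2 + 2 * ((A *m z) i 0 * e i 0))).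
      by rewrite !big_split /= -mulr_sumr hxe mulr0 addr0.
    move=> i _; have := congr1 (fun M : 'cV_p => M i 0) hte; rewrite /= !mxE => ->.
    ring.
  have -> : \sum_i ((A *m ts) i 0 - b i 0) ^+ 2 = \sum_i e i 0 ^+ 2.
    by apply: eq_bigr => i _; rewrite /e !mxE.
  by rewrite gerDr.
have Az : A *m z = 0.
  apply/matrixP => i j; rewrite (ord1 j) [RHS]mxE.
  exact: (sqsum0 (y := fun i => (A *m z) i 0) hsq i).
have z0 : z = 0.
  have : invmx B *m (B *m z) = 0 by rewrite /B -mulmxA Az !mulmx0.
  by rewrite mulmxA mulVmx // mul1mx.
have -> : t = ts by apply/eqP; rewrite -subr_eq0 -/z z0.
by rewrite /ts /b !mulmxA.
Qed.

Lemma limsup_geo (R : realType) (u : R^o^nat) (k0 e0 c : R) :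
  0 <= k0 < 1 -> (forall k, 0 <= u k) -> (forall k, u k <= k0 ^+ k * e0 + c) ->
  limn_sup u <= c.
Proof.
move=> /andP[k00 k01] u0 hu.
set v : R^o^nat := fun k => k0 ^+ k * e0 + c.
have hvb k : v k <= `|e0| + c.
  rewrite /v lerD2r; apply: le_trans (ler_norm _) _.
  rewrite normrM normrX ger0_norm //; apply: ler_piMl => //; apply: exprn_ile1 => //; exact: ltW.
have ubu : has_ubound (range u).
  by exists (`|e0| + c) => _ [k _ <-]; exact: le_trans (hu k) (hvb k).
have ubv : has_ubound (range v) by exists (`|e0| + c) => _ [k _ <-]; exact: hvb.
have lbu : has_lbound (range u) by exists 0 => _ [k _ <-].
have cv : v @ \oo --> (0 * e0 + c : R^o).
  apply: cvgD; last exact: cvg_cst.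
  apply: cvgMl.
  by apply: cvg_expr; rewrite ger0_norm.
rewrite mul0r add0r in cv.
have csu : cvgn (sups u) := cvgP _ (cvg_sups_inf ubu lbu).
have csv := cvg_sups cv.
rewrite /limn_sup -(cvg_lim _ csv) //.
apply: ler_lim => //; first exact: (cvgP _ csv).
apply: nearW => k; apply: ge_sup; first by exists (u k), k => /=.
move=> _ [j /= kj <-]; apply: le_trans (hu j) _.
apply: ub_le_sup; last by exists j.
exact: has_ubound_sdrop.
Qed.

Lemma arith (R : realType) (al c dl am e a b x y D e' : R) :
 0 <= al -> al < 1 -> 0 <= c -> 0 <= dl -> 0 <= am -> 0 <= e -> 0 <= b ->
 b <= c * e -> (1 - al) * a <= 2 * al * b -> x <= a + b -> y <= am * x ->
 e' <= dl * y + D + a ->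
 e' <= (c + (dl * (am * c) + c) * (1 + al) / (1 - al)) * e + D.
Proof.
move=> al0 al1 c0 dl0 am0 e0 b0 hb hab hx hy he.
have hal : 0 < 1 - al by rewrite subr_gt0.
set r := (1 - al)^-1.
have hr : (1 - al) * r = 1 by rewrite mulfV // gt_eqF.
have r0 : 0 <= r by rewrite invr_ge0 ltW.
have h1 : a <= 2 * al * b * r.
  have : (1 - al) * a * r <= 2 * al * b * r by rewrite ler_wpM2r.
  by rewrite mulrAC hr mul1r.
have h2 : x <= (1 + al) * r * b.
  have -> : (1 + al) * r * b = 2 * al * b * r + b * ((1 - al) * r) by ring.
  rewrite hr mulr1; lra.
have h3 : y <= am * ((1 + al) * r * b) := le_trans hy (ler_wpM2l am0 h2).
have h4 : dl * y <= dl * (am * ((1 + al) * r * b)) := ler_wpM2l dl0 h3.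
have K0 : 0 <= dl * am * (1 + al) * r + 2 * al * r.
  by rewrite addr_ge0 // ?mulr_ge0 // ?addr_ge0 // ltW.
have h5 := ler_wpM2l K0 hb.
have ce0 : 0 <= c * e by rewrite mulr_ge0.
have h6 : 0 <= (1 - al) * (2 * r * (c * e)).
  apply: mulr_ge0; first exact: ltW.
  by apply: mulr_ge0 => //; apply: mulr_ge0.
have h7 : c * e = c * e * ((1 - al) * r) by rewrite hr mulr1.
nra.
Qed.

Lemma fixb (R : realType) (al x : R) : 0 <= al -> al < 1 -> x <= 1 + al * x ->
  x <= (1 - al)^-1.
Proof.
move=> al0 al1 hx.
have hal : 0 < 1 - al by rewrite subr_gt0.
set r := (1 - al)^-1.
have hr : (1 - al) * r = 1 by rewrite mulfV // gt_eqF.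
have r0 : 0 <= r by rewrite invr_ge0 ltW.
have : (1 - al) * x * r <= 1 * r by rewrite ler_wpM2r //; lra.
by rewrite mulrAC hr !mul1r.
Qed.

Theorem theorem2 (R : realType) (n : nat)
  (U W : 'I_n -> finType)
  (P : forall s, U s -> W s -> 'I_n -> R) (g : forall s, U s -> W s -> R)
  (alpha : R)
  (hU : forall s, (0 < #|U s|)%N) (hW : forall s, (0 < #|W s|)%N)
  (hP0 : forall s u w s', 0 <= P s u w s')
  (hP1 : forall s u w, \sum_(s' < n) P s u w s' = 1)
  (hg : forall s u w, 0 <= g s u w <= 1)
  (halpha : 0 < alpha < 1)
  (H m d p : nat) (hH : (1 <= H)%N) (hm : (1 <= m)%N)
  (Phi : 'M[R]_(n, d))
  (idx : 'I_p -> 'I_n) (hidx : injective idx)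
  (PhiD := \matrix_(i < p, j < d) Phi (idx i) j)
  (Psel := \matrix_(i < p, s < n) (if idx i == s then 1 else 0 : R))
  (hrank : \rank PhiD = d)
  (Mproj := Phi *m invmx (PhiD^T *m PhiD) *m PhiD^T *m Psel)
  (T := Tbell P g alpha)
  (theta : nat -> 'cV[R]_d)
  (mu : nat -> forall s, {ffun U s -> R}) (nu : nat -> forall s, {ffun W s -> R})
  (hmu : forall k s, is_dist (mu k s)) (hnu : forall k s, is_dist (nu k s))
  (hgreedy : forall k : nat,
     Tpol P g alpha (mu k.+1) (nu k.+1) (iter H.-1 T (Phi *m theta k))
     = iter H T (Phi *m theta k))
  (hls : forall (k : nat) (th : 'cV[R]_d),
     \sum_(i < p) ((Phi *m theta k.+1) (idx i) 0
        - (iter m (Tpol P g alpha (mu k.+1) (nu k.+1))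
                  (iter H.-1 T (Phi *m theta k))) (idx i) 0) ^+ 2
     <= \sum_(i < p) ((Phi *m th) (idx i) 0
        - (iter m (Tpol P g alpha (mu k.+1) (nu k.+1))
                  (iter H.-1 T (Phi *m theta k))) (idx i) 0) ^+ 2)
  (J : nat -> 'cV[R]_n)
  (hJ : forall k, (1 <= k)%N -> Tpol P g alpha (mu k) (nu k) (J k) = J k)
  (Jstar : 'cV[R]_n) (hJstar : T Jstar = Jstar)
  (delta_FV := mnorm_inf Mproj)
  (delta_app := sup [set x | exists k : nat, (1 <= k)%N /\
                      x = vnorm (J k - Mproj *m J k)])
  (kappa := alpha ^+ H.-1 + (delta_FV * alpha ^+ (m + H.-1) + alpha ^+ H.-1)
                            * (1 + alpha) / (1 - alpha))
  (hkappa : kappa < 1) :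
  (forall k : nat,
     vnorm (Phi *m theta k - Jstar)
     <= kappa ^+ k * vnorm (Phi *m theta 0 - Jstar) + delta_app / (1 - kappa))
  /\ limn_sup (fun k => vnorm (Phi *m theta k - Jstar)) <= delta_app / (1 - kappa).
Proof.
have /andP[ha0' ha1] := halpha; have ha0 := ltW ha0'.
have dFV0 : 0 <= delta_FV by exact: mnorm_ge0.
pose e k := vnorm (Phi *m theta k - Jstar).
have hLS : forall k, Phi *m theta k.+1 = Mproj *m
    iter m (Tpol P g alpha (mu k.+1) (nu k.+1)) (iter H.-1 T (Phi *m theta k)).
  move=> k; rewrite /Mproj; apply: (@lsq _ _ _ _ Phi idx PhiD Psel) => //.
  - by move=> i j; rewrite /PhiD mxE.
  - by move=> i s; rewrite /Psel mxE.
have hdset : has_ubound [set x | exists k : nat, (1 <= k)%N /\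
                      x = vnorm (J k - Mproj *m J k)].
  exists ((1 + delta_FV) * (1 - alpha)^-1) => x [k [hk ->]].
  have hJb := fixb ha0 ha1 (Tpol_fix_bound hP0 hP1 hg ha0 (hmu k) (hnu k) (hJ k hk)).
  apply: le_trans (_ : vnorm (J k) + vnorm (Mproj *m J k) <= _).
    apply: vnorm_le; first by rewrite addr_ge0 ?vnorm_ge0.
    move=> i; have h1 := ler_vnorm (J k) i; have h2 := ler_vnorm (Mproj *m J k) i.
    rewrite !mxE in h1 h2 *; apply: le_trans (ler_normB _ _) _; exact: lerD.
  apply: le_trans (_ : vnorm (J k) + delta_FV * vnorm (J k) <= _).
    by rewrite lerD2l; exact: mnorm_bound.
  rewrite -{1}(mul1r (vnorm (J k))) -mulrDl ler_wpM2l //.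
  by rewrite addr_ge0.
have hdapp : forall k, (1 <= k)%N -> vnorm (J k - Mproj *m J k) <= delta_app.
  by move=> k hk; apply: ub_le_sup => //; exists k.
have dapp0 : 0 <= delta_app.
  by apply: le_trans (hdapp 1%N isT); exact: vnorm_ge0.
have step : forall k, e k.+1 <= kappa * e k + delta_app.
  move=> k.
  set V := Phi *m theta k.
  set Wv := iter H.-1 T V.
  set Tp := Tpol P g alpha (mu k.+1) (nu k.+1).
  set Jk := J k.+1.
  set Y := iter m Tp Wv.
  have hb : vnorm (Wv - Jstar) <= alpha ^+ H.-1 * e k.
    exact: (Tbell_iter hU hW hP0 hP1 hg ha0 V H.-1 hJstar).
  have hTW : Tp Wv = T Wv.
    by rewrite /Tp hgreedy -iterS prednK.
  have hJk : Tp Jk = Jk by rewrite /Tp /Jk hJ.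
  have ha : (1 - alpha) * vnorm (Jk - Jstar) <= 2 * alpha * vnorm (Wv - Jstar).
    have eq : Jk - Jstar = (Tp Jk - Tp Wv) + (T Wv - T Jstar).
      by rewrite hJk hTW hJstar addrA subrK.
    have h1 : vnorm (Jk - Jstar) <= alpha * vnorm (Jk - Wv) + alpha * vnorm (Wv - Jstar).
      rewrite {1}eq; apply: le_trans (vnormD _ _) _; apply: lerD.
        exact: (Tpol_contr g hP0 hP1 ha0 (hmu k.+1) (hnu k.+1)).
      exact: (Tbell_contr hU hW hP0 hP1 hg ha0).
    have h2 : vnorm (Jk - Wv) <= vnorm (Jk - Jstar) + vnorm (Wv - Jstar).
      have -> : Jk - Wv = (Jk - Jstar) + (Jstar - Wv) by rewrite addrA subrK.
      by apply: le_trans (vnormD _ _) _; rewrite (vnormC Jstar).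
    have h3 := ler_wpM2l ha0 h2.
    lra.
  have hY : vnorm (Y - Jk) <= alpha ^+ m * vnorm (Wv - Jk).
    exact: (Tpol_iter hP0 hP1 ha0 (hmu k.+1) (hnu k.+1) Wv m hJk).
  have hx : vnorm (Wv - Jk) <= vnorm (Jk - Jstar) + vnorm (Wv - Jstar).
    have -> : Wv - Jk = (Wv - Jstar) + (Jstar - Jk) by rewrite addrA subrK.
    apply: le_trans (vnormD _ _) _; rewrite (vnormC Jstar) addrC //.
  have he : e k.+1 <= delta_FV * vnorm (Y - Jk) + delta_app + vnorm (Jk - Jstar).
    rewrite /e hLS -/V -/Wv -/Tp -/Y.
    have -> : Mproj *m Y - Jstar
        = Mproj *m (Y - Jk) + ((Mproj *m Jk - Jk) + (Jk - Jstar)).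
      by rewrite mulmxBr !addrA subrK subrK.
    apply: le_trans (vnormD _ _) _.
    apply: le_trans (lerD (lexx _) (vnormD _ _)) _.
    rewrite addrA; apply: lerD => //; apply: lerD; first exact: mnorm_bound.
    by rewrite vnormC; apply: hdapp.
  have := @arith R alpha (alpha ^+ H.-1) delta_FV (alpha ^+ m) (e k)
    (vnorm (Jk - Jstar)) (vnorm (Wv - Jstar)) (vnorm (Wv - Jk)) (vnorm (Y - Jk))
    delta_app (e k.+1) ha0 ha1 (exprn_ge0 _ ha0) dFV0 (exprn_ge0 _ ha0)
    (vnorm_ge0 _) (vnorm_ge0 _) hb ha hx hY he.
  by rewrite /kappa exprD mulrC.
have kap0 : 0 <= kappa.
  rewrite /kappa; apply: addr_ge0; first exact: exprn_ge0.
  apply: mulr_ge0; last by rewrite invr_ge0 subr_ge0 ltW.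
  apply: mulr_ge0; last by rewrite addr_ge0.
  by apply: addr_ge0; [apply: mulr_ge0 => //; exact: exprn_ge0 | exact: exprn_ge0].
have hk1 : 0 < 1 - kappa by rewrite subr_gt0.
have bound : forall k, e k <= kappa ^+ k * e 0%N + delta_app / (1 - kappa).
  elim=> [|k IH].
    by rewrite expr0 mul1r lerDl divr_ge0 // ltW.
  apply: le_trans (step k) _.
  set s := (1 - kappa)^-1.
  have hs : (1 - kappa) * s = 1 by rewrite mulfV // gt_eqF.
  have := ler_wpM2l kap0 IH.
  have -> : kappa ^+ k.+1 * e 0%N + delta_app * s
     = kappa * (kappa ^+ k * e 0%N + delta_app * s) + delta_app * ((1 - kappa) * s).
    by rewrite exprS; ring.
  rewrite hs mulr1 => h.
  exact: lerD h (lexx _).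
split; first exact: bound.
apply: (@limsup_geo R (fun k => e k) kappa (e 0%N)).
- by rewrite kap0.
- by move=> k; exact: vnorm_ge0.
- exact: bound.
Qed.
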